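(* Let $\{G_i\}_{i\in I}$ be a family of groups such that each abelianization $G_i^{ab}=G_i/G_i'$ has finite exponent and $\gcd(\exp(G_i^{ab}),\exp(G_j^{ab}))=1$ for all $i\ne j$. Then $\prod_{i\in I}G_i$ is capable if and only if each $G_i$ is capable. Likewise, for any $c\ge1$, $\prod_{i\in I}G_i$ is $\mathcal{N}_c$-capable if and only if each $G_i$ is $\mathcal{N}_c$-capable.
   Context: $\prod_{i\in I}G_i$ is the restricted direct product. A group $G$ is capable if $G\cong E/Z(E)$ for some group $E$. $\mathcal{N}_c$ is the variety of nilpotent groups of class at most $c$ (law $[x_1,\dots,x_{c+1}]$). For a variety $\mathcal{V}$ with laws $V$, the marginal subgroup $V^*(E)$ of a group $E$ is the set of $g\in E$ with $v(x_1,\dots,gx_i,\dots,x_n)=v(x_1,\dots,x_n)$ for all laws $v\in V$, all $x_j\in E$ and all $i$ (for $\mathcal{N}_c$ it is the $c$-th centre $Z_c(E)$); $G$ is $\mathcal{V}$-capable if $G\cong E/V^*(E)$ for some group $E$. *)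

(* Defs.v *)
From Stdlib Require Import Arith List FunctionalExtensionality ProofIrrelevance.
Import ListNotations.
Set Implicit Arguments.

Record Group := {
  car :> Type;
  gmul : car -> car -> car;
  ginv : car -> car;
  gone : car;
  gmulA : forall x y z, gmul x (gmul y z) = gmul (gmul x y) z;
  gmul1 : forall x, gmul gone x = x;
  gmulV : forall x, gmul (ginv x) x = gone
}.

Arguments gmul {g}.
Arguments ginv {g}.
Arguments gone {g}.
Arguments gmulA {g}.
Arguments gmul1 {g}.
Arguments gmulV {g}.

Definition is_hom {A B : Group} (f : A -> B) : Prop :=
  forall x y, f (gmul x y) = gmul (f x) (f y).

Definition comm {G : Group} (a b : G) : G :=
  gmul (gmul (gmul (ginv a) (ginv b)) a) b.

Definition center {E : Group} (z : E) : Prop := forall x : E, gmul z x = gmul x z.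

Fixpoint zeta (E : Group) (c : nat) : E -> Prop :=
  match c with
  | 0 => fun g => g = gone
  | S k => fun g => forall x : E, @zeta E k (comm g x)
  end.

(* G is capable: G ≅ E/Z(E), i.e. there is a surjective homomorphism E -> G
   with kernel exactly Z(E). *)
Definition capable (G : Group) : Prop :=
  exists (E : Group) (f : E -> G),
    is_hom f /\ (forall g : G, exists e : E, f e = g) /\
    (forall e : E, f e = gone <-> center e).

(* G is N_c-capable: G ≅ E / N_c^*(E) = E / Z_c(E). *)
Definition Nc_capable (c : nat) (G : Group) : Prop :=
  exists (E : Group) (f : E -> G),
    is_hom f /\ (forall g : G, exists e : E, f e = g) /\
    (forall e : E, f e = gone <-> zeta E c e).

Fixpoint gpow {G : Group} (g : G) (n : nat) : G :=
  match n with 0 => gone | S k => gmul g (gpow g k) end.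

Inductive in_derived (G : Group) : G -> Prop :=
  | der1 : in_derived G gone
  | derc : forall a b h, in_derived G h -> in_derived G (gmul (comm a b) h).

Definition exp_ab (G : Group) (n : nat) : Prop :=
  0 < n /\ (forall g : G, in_derived G (gpow g n)) /\
  (forall m, 0 < m -> (forall g : G, in_derived G (gpow g m)) -> n <= m).

Section RProd.
Variables (I : Type) (G : I -> Group).

Definition fin_supp (f : forall i, G i) : Prop :=
  exists l : list I, forall i, ~ In i l -> f i = gone.

Definition rp_car := { f : forall i, G i | fin_supp f }.

Lemma rp_mul_supp (f g : rp_car) :
  fin_supp (fun i => gmul (proj1_sig f i) (proj1_sig g i)).
Proof.
  destruct f as [f [l1 H1]], g as [g [l2 H2]]; exists (l1 ++ l2); simpl.
  intros i Hi; rewrite H1, H2; [apply gmul1| |];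
  intro; apply Hi; apply in_or_app; auto.
Qed.

Lemma ginv1 (H : Group) : ginv (@gone H) = gone.
Proof.
  rewrite <- (gmulV (@gone H)) at 2.
  assert (Hr : forall x : H, gmul x gone = x).
  { intro x.
    assert (E1 : gmul (ginv (ginv x)) (ginv x) = gone) by apply gmulV.
    assert (E2 : gmul x (ginv x) = gone).
    { rewrite <- (gmul1 (gmul x (ginv x))), <- E1 at 1.
      rewrite <- gmulA, (gmulA (ginv x)), gmulV, gmul1. exact E1. }
    rewrite <- (gmulV x), gmulA, E2, gmul1. reflexivity. }
  rewrite Hr. reflexivity.
Qed.

Lemma rp_inv_supp (f : rp_car) : fin_supp (fun i => ginv (proj1_sig f i)).
Proof.
  destruct f as [f [l H]]; exists l; simpl; intros i Hi; rewrite H by exact Hi.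
  apply ginv1.
Qed.

Lemma rp_one_supp : fin_supp (fun i => @gone (G i)).
Proof. exists nil; auto. Qed.

Definition rp_mul (f g : rp_car) : rp_car := exist _ _ (rp_mul_supp f g).
Definition rp_inv (f : rp_car) : rp_car := exist _ _ (rp_inv_supp f).
Definition rp_one : rp_car := exist _ _ rp_one_supp.

Lemma rp_eq (f g : rp_car) : (forall i, proj1_sig f i = proj1_sig g i) -> f = g.
Proof.
  destruct f as [f Hf], g as [g Hg]; simpl; intro H.
  assert (f = g) by (apply functional_extensionality_dep; exact H).
  subst; f_equal; apply proof_irrelevance.
Qed.

Lemma rp_mulA x y z : rp_mul x (rp_mul y z) = rp_mul (rp_mul x y) z.
Proof. apply rp_eq; intro; apply gmulA. Qed.
Lemma rp_mul1 x : rp_mul rp_one x = x.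
Proof. apply rp_eq; intro; apply gmul1. Qed.
Lemma rp_mulV x : rp_mul (rp_inv x) x = rp_one.
Proof. apply rp_eq; intro; apply gmulV. Qed.

Definition RestrictedProduct : Group :=
  @Build_Group rp_car rp_mul rp_inv rp_one rp_mulA rp_mul1 rp_mulV.
End RProd.

(* Main.v *)
Require Import Defs.
From Stdlib Require Import Arith.
From Stdlib Require Import Arith Lia List FunctionalExtensionality ProofIrrelevance ClassicalEpsilon PropExtensionality.
Import ListNotations.

Section GB.
Variable H : Group.
Implicit Types x y z : H.

Lemma mulA' x y z : gmul (gmul x y) z = gmul x (gmul y z).
Proof. symmetry; apply gmulA. Qed.

Lemma mulKV x y : gmul (ginv x) (gmul x y) = y.
Proof. rewrite gmulA, gmulV, gmul1. reflexivity. Qed.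

Lemma invinv x : ginv (ginv x) = x.
Proof.
  transitivity (gmul (ginv (ginv x)) (gmul (ginv x) x)).
  - rewrite gmulV. 
    assert (E1 : gmul (ginv (ginv x)) (ginv x) = gone) by apply gmulV.
    assert (E2 : gmul x (ginv x) = gone).
    { rewrite <- (gmul1 (gmul x (ginv x))), <- E1 at 1.
      rewrite <- gmulA, (gmulA (ginv x)), gmulV, gmul1. exact E1. }
    assert (Hr : forall y : H, gmul y gone = y).
    { intro y.
      assert (F1 : gmul (ginv (ginv y)) (ginv y) = gone) by apply gmulV.
      assert (F2 : gmul y (ginv y) = gone).
      { rewrite <- (gmul1 (gmul y (ginv y))), <- F1 at 1.
        rewrite <- gmulA, (gmulA (ginv y)), gmulV, gmul1. exact F1. }
      rewrite <- (gmulV y), gmulA, F2, gmul1. reflexivity. }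
    rewrite Hr; reflexivity.
  - rewrite gmulA, gmulV, gmul1. reflexivity.
Qed.

Lemma mulV x : gmul x (ginv x) = gone.
Proof. rewrite <- (gmulV (ginv x)), invinv. reflexivity. Qed.

Lemma mul1r x : gmul x gone = x.
Proof. rewrite <- (gmulV x), gmulA, mulV, gmul1. reflexivity. Qed.

Lemma mulVK x y : gmul x (gmul (ginv x) y) = y.
Proof. rewrite gmulA, mulV, gmul1. reflexivity. Qed.

Lemma inv1 : ginv (@gone H) = gone.
Proof. rewrite <- (gmul1 (ginv gone)), mulV. reflexivity. Qed.

Lemma mul_cancel_l x y z : gmul x y = gmul x z -> y = z.
Proof. intro E. rewrite <- (mulKV x y), E, mulKV. reflexivity. Qed.

Lemma invM x y : ginv (gmul x y) = gmul (ginv y) (ginv x).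
Proof.
  apply (mul_cancel_l (gmul x y)). rewrite mulV.
  rewrite mulA', (gmulA y), mulV, gmul1, mulV. reflexivity.
Qed.
End GB.
Arguments mul_cancel_l {H} x y z.

Create HintDb grp.
#[global] Hint Rewrite mulA' @gmul1 mul1r @gmulV mulV mulKV mulVK invM invinv inv1 : grp.
Ltac grp := unfold comm in *; autorewrite with grp; try reflexivity.

Definition gconj {H : Group} (w g : H) : H := gmul (gmul (ginv g) w) g.

Section Test.
Variable H : Group.
Lemma hw (x w z : H) : comm (comm x w) z =
  gmul (gmul (ginv w) (ginv (gmul (gconj (comm (comm (ginv w) (ginv z)) x) z)
                                  (gconj (comm (comm z (ginv x)) (ginv w)) x)))) w.
Proof. unfold gconj; grp. Qed.
End Test.

Section Zeta.
Variable E : Group.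

Lemma comm_1l (y : E) : comm gone y = gone. Proof. grp. Qed.
Lemma comm_1r (y : E) : comm y gone = gone. Proof. grp. Qed.

Lemma zeta_props : forall k,
  zeta E k gone /\
  (forall x y, zeta E k x -> zeta E k y -> zeta E k (gmul x y)) /\
  (forall x, zeta E k x -> zeta E k (ginv x)) /\
  (forall x g, zeta E k x -> zeta E k (gconj x g)).
Proof.
  induction k as [|k IH]; simpl.
  - repeat split.
    + intros x y -> ->. grp.
    + intros x ->. grp.
    + intros x g ->. unfold gconj; grp.
  - destruct IH as (I1 & I2 & I3 & I4). repeat split.
    + intro x. rewrite comm_1l. exact I1.
    + intros x y Hx Hy e.
      assert (Eq : comm (gmul x y) e = gmul (gconj (comm x e) y) (comm y e)) by (unfold gconj; grp).
      rewrite Eq. apply I2; auto.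
    + intros x Hx e.
      assert (Eq : comm (ginv x) e = gconj (ginv (comm x e)) (ginv x)) by (unfold gconj; grp).
      rewrite Eq. auto.
    + intros x g Hx e.
      assert (Eq : comm (gconj x g) e = gconj (comm x (gmul (gmul g e) (ginv g))) g) by (unfold gconj; grp).
      rewrite Eq. auto.
Qed.

Lemma zeta1 k : zeta E k gone. Proof. apply zeta_props. Qed.
Lemma zetaM k x y : zeta E k x -> zeta E k y -> zeta E k (gmul x y). Proof. apply zeta_props. Qed.
Lemma zetaV k x : zeta E k x -> zeta E k (ginv x). Proof. apply zeta_props. Qed.
Lemma zetaJ k x g : zeta E k x -> zeta E k (gconj x g). Proof. apply zeta_props. Qed.
Lemma zetaJ' k x g : zeta E k x -> zeta E k (gmul (gmul g x) (ginv g)).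
Proof. intro Hx. assert (Eq : gmul (gmul g x) (ginv g) = gconj x (ginv g)) by (unfold gconj; grp).
  rewrite Eq; apply zetaJ; auto. Qed.

Lemma zeta_comm m z e : zeta E m z -> zeta E (m - 1) (comm z e).
Proof.
  destruct m as [|m]; simpl.
  - intros ->. rewrite comm_1l. reflexivity.
  - rewrite Nat.sub_0_r. auto.
Qed.

Lemma zeta_commV m z e : zeta E m z -> zeta E (m - 1) (comm e z).
Proof. intro Hz. assert (Eq : comm e z = ginv (comm z e)) by grp.
  rewrite Eq. apply zetaV, zeta_comm; auto. Qed.

Inductive lcom (P : E -> Prop) : nat -> E -> Prop :=
| lc1 : forall a, P a -> lcom P 1 a
| lcS : forall k y a, lcom P k y -> P a -> lcom P (S k) (comm y a).

Lemma lcom_T P k y : lcom P k y -> lcom (fun _ => True) k y.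
Proof. induction 1; constructor; auto. Qed.

Lemma lcom_pos P k y : lcom P k y -> 1 <= k.
Proof. induction 1; lia. Qed.

Lemma hw' (x w z : E) : comm (comm x w) z =
  gmul (gmul (ginv w) (ginv (gmul (gconj (comm (comm (ginv w) (ginv z)) x) z)
                                  (gconj (comm (comm z (ginv x)) (ginv w)) x)))) w.
Proof. unfold gconj; grp. Qed.

Lemma lemM k y : lcom (fun _ => True) k y -> forall m z, zeta E m z -> zeta E (m - k) (comm z y).
Proof.
  induction 1 as [a _|k y a Hy IH _]; intros m z Hz.
  - apply zeta_comm; auto.
  - assert (Eq : comm z (comm y a) = ginv (comm (comm y a) z)) by grp.
    rewrite Eq, hw'. apply zetaV.
    assert (Eq2 : gmul (gmul (ginv a) (ginv (gmul (gconj (comm (comm (ginv a) (ginv z)) y) z)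
                                  (gconj (comm (comm z (ginv y)) (ginv a)) y)))) a
          = gconj (ginv (gmul (gconj (comm (comm (ginv a) (ginv z)) y) z)
                                  (gconj (comm (comm z (ginv y)) (ginv a)) y))) a) by (unfold gconj; grp).
    rewrite Eq2. apply zetaJ, zetaV, zetaM; apply zetaJ.
    + replace (m - S k) with ((m - 1) - k) by lia. apply IH.
      apply zeta_commV. apply zetaV; auto.
    + replace (m - S k) with ((m - k) - 1) by lia. apply zeta_comm.
      assert (Eq3 : comm z (ginv y) = gmul (gmul y (ginv (comm z y))) (ginv y)) by grp.
      rewrite Eq3. apply zetaJ', zetaV. apply IH; auto.
Qed.
End Zeta.

Section Quot.
Variable E : Group.
Variable W : E -> Prop.
Hypothesis W1 : W gone.
Hypothesis WM : forall x y, W x -> W y -> W (gmul x y).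
Hypothesis WV : forall x, W x -> W (ginv x).
Hypothesis WJ : forall x g, W x -> W (gconj x g).

Definition qrel (x y : E) : Prop := W (gmul (ginv x) y).
Definition qcar := {P : E -> Prop | exists x, P = qrel x}.
Definition qcl (x : E) : qcar := exist _ (qrel x) (ex_intro _ x eq_refl).
Definition qrep (P : qcar) : E :=
  proj1_sig (constructive_indefinite_description _ (proj2_sig P)).

Lemma qrep_spec P : P = qcl (qrep P).
Proof.
  unfold qrep. destruct (constructive_indefinite_description _ _) as [x Hx]; simpl.
  destruct P as [P HP]; simpl in *. subst. unfold qcl. f_equal. apply proof_irrelevance.
Qed.

Lemma qcl_eq x y : qcl x = qcl y <-> W (gmul (ginv x) y).
Proof.
  split.
  - intro Eq. assert (F : qrel x y = qrel y y) by (change (proj1_sig (qcl x) y = proj1_sig (qcl y) y); rewrite Eq; reflexivity).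
    unfold qrel in F. rewrite F, gmulV. exact W1.
  - intro Hw. unfold qcl.
    assert (F : qrel x = qrel y).
    { apply functional_extensionality; intro z. apply propositional_extensionality. unfold qrel; split; intro Hz.
      + replace (gmul (ginv y) z) with (gmul (ginv (gmul (ginv x) y)) (gmul (ginv x) z)) by grp. auto.
      + replace (gmul (ginv x) z) with (gmul (gmul (ginv x) y) (gmul (ginv y) z)) by grp. auto. }
    revert F. generalize (ex_intro (fun x0 : E => qrel x = qrel x0) x eq_refl).
    generalize (ex_intro (fun x0 : E => qrel y = qrel x0) y eq_refl).
    intros e1 e2 F. revert e1 e2. rewrite F. intros. f_equal. apply proof_irrelevance.
Qed.

Definition qmul (P Q : qcar) : qcar := qcl (gmul (qrep P) (qrep Q)).
Definition qinv (P : qcar) : qcar := qcl (ginv (qrep P)).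
Definition qone : qcar := qcl gone.

Lemma qmul_cl x y : qmul (qcl x) (qcl y) = qcl (gmul x y).
Proof.
  unfold qmul. apply qcl_eq.
  assert (Hx : W (gmul (ginv (qrep (qcl x))) x)) by (apply qcl_eq; rewrite <- qrep_spec; reflexivity).
  assert (Hy : W (gmul (ginv (qrep (qcl y))) y)) by (apply qcl_eq; rewrite <- qrep_spec; reflexivity).
  set (a := qrep (qcl x)) in *. set (b := qrep (qcl y)) in *.
  replace (gmul (ginv (gmul a b)) (gmul x y)) with
    (gmul (gconj (gmul (ginv a) x) b) (gmul (ginv b) y)) by (unfold gconj; grp).
  auto.
Qed.

Lemma qinv_cl x : qinv (qcl x) = qcl (ginv x).
Proof.
  unfold qinv. apply qcl_eq.
  assert (Hx : W (gmul (ginv (qrep (qcl x))) x)) by (apply qcl_eq; rewrite <- qrep_spec; reflexivity).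
  set (a := qrep (qcl x)) in *.
  replace (gmul (ginv (ginv a)) (ginv x)) with (gconj (ginv (gmul (ginv a) x)) (ginv x)) by (unfold gconj; grp).
  auto.
Qed.

Lemma qind (Pr : qcar -> Prop) : (forall x, Pr (qcl x)) -> forall P, Pr P.
Proof. intros H P. rewrite (qrep_spec P). apply H. Qed.

Lemma q_mulA x y z : qmul x (qmul y z) = qmul (qmul x y) z.
Proof.
  revert x y z. refine (qind _ _); intro x. refine (qind _ _); intro y. refine (qind _ _); intro z.
  rewrite !qmul_cl, gmulA. reflexivity.
Qed.
Lemma q_mul1 x : qmul qone x = x.
Proof. revert x; refine (qind _ _); intro x. unfold qone; rewrite qmul_cl, gmul1; reflexivity. Qed.
Lemma q_mulV x : qmul (qinv x) x = qone.
Proof. revert x; refine (qind _ _); intro x. rewrite qinv_cl, qmul_cl, gmulV; reflexivity. Qed.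

Definition QG : Group := @Build_Group qcar qmul qinv qone q_mulA q_mul1 q_mulV.

Definition qpi (x : E) : QG := qcl x.
Lemma qpi_hom : is_hom qpi.
Proof. intros x y. symmetry. apply qmul_cl. Qed.
Lemma qpi_one x : qpi x = gone <-> W x.
Proof.
  change (qcl x = qcl gone <-> W x). rewrite qcl_eq. rewrite mul1r.
  split; intro H. rewrite <- invinv. auto. auto.
Qed.
Lemma qpi_surj (q : QG) : exists x, qpi x = q.
Proof. exists (qrep q). symmetry; apply qrep_spec. Qed.
End Quot.

Section Hom.
Variables A B : Group.
Variable f : A -> B.
Hypothesis hf : is_hom f.
Lemma hom1 : f gone = gone.
Proof. apply (mul_cancel_l (f gone)). rewrite <- hf, !mul1r. reflexivity. Qed.
Lemma homV x : f (ginv x) = ginv (f x).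
Proof. apply (mul_cancel_l (f x)). rewrite <- hf, mulV, mulV. apply hom1. Qed.
Lemma homC x y : f (comm x y) = comm (f x) (f y).
Proof. unfold comm. rewrite !hf, !homV. reflexivity. Qed.
Lemma homP x n : f (gpow x n) = gpow (f x) n.
Proof. induction n; simpl. apply hom1. rewrite hf, IHn; reflexivity. Qed.
End Hom.

Section Pow.
Variable H : Group.
Lemma gpowD (x : H) m n : gpow x (m + n) = gmul (gpow x m) (gpow x n).
Proof. induction m; simpl. grp. rewrite IHm; grp. Qed.
Lemma gpow1n n : gpow (@gone H) n = gone.
Proof. induction n; simpl; auto. rewrite IHn; grp. Qed.
Lemma gpowM (x : H) m n : gpow x (m * n) = gpow (gpow x m) n.
Proof. induction n; simpl. rewrite Nat.mul_0_r; reflexivity.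
  rewrite Nat.mul_succ_r, Nat.add_comm, gpowD, IHn. reflexivity. Qed.
Lemma gpow_coprime (x : H) m n : 0 < m -> Nat.gcd m n = 1 ->
  gpow x m = gone -> gpow x n = gone -> x = gone.
Proof.
  intros Hm Hg Hxm Hxn.
  destruct (Nat.gcd_bezout_pos m n Hm) as [a [b Hab]]. rewrite Hg in Hab.
  assert (E1 : gpow x (a * m) = gone) by (rewrite Nat.mul_comm, gpowM, Hxm, gpow1n; reflexivity).
  assert (E2 : gpow x (b * n) = gone) by (rewrite Nat.mul_comm, gpowM, Hxn, gpow1n; reflexivity).
  rewrite Hab, gpowD, E2 in E1. simpl in E1. autorewrite with grp in E1. exact E1.
Qed.
Lemma gpowV (x : H) n : gpow x n = gone -> gpow (ginv x) n = gone.
Proof.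
  intro Hx. assert (Comm : forall k, gmul x (gpow x k) = gmul (gpow x k) x).
  { induction k; simpl. grp. rewrite IHk at 1. rewrite gmulA. reflexivity. }
  assert (K : forall k, gpow (ginv x) k = ginv (gpow x k)).
  { induction k; simpl. rewrite inv1; auto. rewrite IHk, Comm, invM. reflexivity. }
  rewrite K, Hx. apply inv1.
Qed.
End Pow.

Section Pair.
Variable H : Group.
Variable t : H.
Definition fc (x : H) := comm x t.
Lemma center_mul (a b : H) : center a -> center b -> center (gmul a b).
Proof. intros Ha Hb x. rewrite mulA', Hb, gmulA, Ha, mulA'. reflexivity. Qed.
Lemma center_inv (a : H) : center a -> center (ginv a).
Proof. intros Ha x. apply (mul_cancel_l a). rewrite gmulA, mulV, gmul1.
  rewrite gmulA, Ha, mulA', mulV, mul1r. reflexivity. Qed.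
Lemma center_one : center (@gone H).
Proof. intro x; grp. Qed.
Lemma fc_mul x y : center (fc x) -> fc (gmul x y) = gmul (fc x) (fc y).
Proof.
  intro Hc. assert (Eq : fc (gmul x y) = gmul (gmul (gmul (ginv y) (fc x)) y) (fc y)) by (unfold fc; grp).
  rewrite Eq, (mulA' _ (ginv y) (fc x) y), Hc, mulKV. reflexivity.
Qed.
Lemma fc_inv x : center (fc x) -> fc (ginv x) = ginv (fc x).
Proof.
  intro Hc. assert (Eq : fc (ginv x) = gmul (gmul x (ginv (fc x))) (ginv x)) by (unfold fc; grp).
  rewrite Eq, (mulA' _ x (ginv (fc x)) (ginv x)), (center_inv _ Hc), mulVK. reflexivity.
Qed.
Lemma fc_comm u v : center (fc u) -> center (fc v) -> fc (comm u v) = gone.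
Proof.
  intros Hu Hv.
  assert (Hiu : center (fc (ginv u))) by (rewrite fc_inv; auto; apply center_inv; auto).
  assert (Hiv : center (fc (ginv v))) by (rewrite fc_inv; auto; apply center_inv; auto).
  rewrite fc_inv in Hiu, Hiv; auto.
  assert (F3 : fc (gmul (ginv u) (ginv v)) = gmul (ginv (fc u)) (ginv (fc v)))
    by (rewrite fc_mul, !fc_inv; auto; rewrite fc_inv; auto).
  assert (C3 : center (gmul (ginv (fc u)) (ginv (fc v)))) by (apply center_mul; auto).
  assert (F4 : fc (gmul (gmul (ginv u) (ginv v)) u) = gmul (gmul (ginv (fc u)) (ginv (fc v))) (fc u))
    by (rewrite fc_mul, F3; auto; rewrite F3; auto).
  assert (C4 : center (gmul (gmul (ginv (fc u)) (ginv (fc v))) (fc u))) by (apply center_mul; auto).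
  change (fc (gmul (gmul (gmul (ginv u) (ginv v)) u) v) = gone).
  rewrite fc_mul, F4 by (rewrite F4; auto).
  rewrite <- (Hu (gmul (ginv (fc u)) (ginv (fc v)))). grp.
Qed.

Inductive derU (U : H -> Prop) : H -> Prop :=
| du1 : derU U gone
| duc : forall u v d, U u -> U v -> derU U d -> derU U (gmul (comm u v) d).

Lemma fc_der (U : H -> Prop) : (forall u, U u -> center (fc u)) ->
  forall d, derU U d -> fc d = gone.
Proof.
  intros HU d Hd. induction Hd. unfold fc; grp.
  rewrite fc_mul, fc_comm, IHHd; auto. grp. rewrite fc_comm; auto. apply center_one.
Qed.

Lemma fc_pow x n : center (fc x) -> fc (gpow x n) = gpow (fc x) n.
Proof. intro Hc. induction n; simpl. unfold fc; grp. rewrite fc_mul, IHn; auto. Qed.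

Lemma fc_key (U : H -> Prop) x n d z : (forall u, U u -> center (fc u)) -> U x ->
  derU U d -> fc z = gone -> gpow x n = gmul d z -> gpow (fc x) n = gone.
Proof.
  intros HU Ux Hd Hz Eq. rewrite <- fc_pow by auto. rewrite Eq, fc_mul, fc_der with (U:=U), Hz; auto.
  grp. rewrite fc_der with (U:=U); auto. apply center_one.
Qed.
End Pair.
From Stdlib Require Import Arith Lia List FunctionalExtensionality ProofIrrelevance ClassicalEpsilon PropExtensionality.
Import ListNotations.

Section Sub.
Variable E : Group.
Variable P : E -> Prop.
Hypothesis P1 : P gone.
Hypothesis PM : forall x y, P x -> P y -> P (gmul x y).
Hypothesis PV : forall x, P x -> P (ginv x).
Definition scar := {x : E | P x}.
Definition smul (x y : scar) : scar := exist _ _ (PM _ _ (proj2_sig x) (proj2_sig y)).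
Definition sinv (x : scar) : scar := exist _ _ (PV _ (proj2_sig x)).
Definition sone : scar := exist _ _ P1.
Lemma s_eq (x y : scar) : proj1_sig x = proj1_sig y -> x = y.
Proof. destruct x, y; simpl; intros ->; f_equal; apply proof_irrelevance. Qed.
Lemma s_mulA x y z : smul x (smul y z) = smul (smul x y) z.
Proof. apply s_eq; apply gmulA. Qed.
Lemma s_mul1 x : smul sone x = x.
Proof. apply s_eq; apply gmul1. Qed.
Lemma s_mulV x : smul (sinv x) x = sone.
Proof. apply s_eq; apply gmulV. Qed.
Definition SG : Group := @Build_Group scar smul sinv sone s_mulA s_mul1 s_mulV.

Lemma zeta_restr m : forall x : SG, zeta E m (proj1_sig x) -> zeta SG m x.
Proof.
  induction m; simpl; intros x Hx.
  - apply s_eq. exact Hx.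
  - intro y. apply IHm. apply Hx.
Qed.
End Sub.

Section RPS.
Variables (I : Type) (G : I -> Group).
Definition deq (a b : I) : {a = b} + {a <> b} := excluded_middle_informative (a = b).
Definition sgl_f (j : I) (x : G j) : forall l, G l :=
  fun l => match deq j l with left H => eq_rect j G x l H | right _ => gone end.
Lemma sgl_supp j x : fin_supp G (sgl_f j x).
Proof.
  exists [j]. intros l Hl. unfold sgl_f. destruct (deq j l) as [e|n]; auto.
  exfalso; apply Hl; left; auto.
Qed.
Definition sgl j x : RestrictedProduct G := exist _ (sgl_f j x) (sgl_supp j x).
Lemma sgl_at j x : proj1_sig (sgl j x) j = x.
Proof. simpl. unfold sgl_f. destruct (deq j j) as [e|n].
  - rewrite (proof_irrelevance _ e eq_refl). reflexivity.
  - exfalso; auto. Qed.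
Lemma sgl_off j x l : j <> l -> proj1_sig (sgl j x) l = gone.
Proof. intro n. simpl. unfold sgl_f. destruct (deq j l); [contradiction|auto]. Qed.
Lemma rp_co_mul (p q : RestrictedProduct G) l :
  proj1_sig (gmul p q) l = gmul (proj1_sig p l) (proj1_sig q l).
Proof. reflexivity. Qed.
Lemma rp_co_inv (p : RestrictedProduct G) l : proj1_sig (ginv p) l = ginv (proj1_sig p l).
Proof. reflexivity. Qed.
Lemma rp_co_one l : proj1_sig (@gone (RestrictedProduct G)) l = gone.
Proof. reflexivity. Qed.
Lemma sgl_hom j : is_hom (sgl j).
Proof.
  intros x y. apply rp_eq. intro l. rewrite rp_co_mul. destruct (deq j l) as [<-|n].
  - rewrite !sgl_at. reflexivity.
  - rewrite !sgl_off by auto. grp.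
Qed.
End RPS.
Arguments sgl {I G} j x.
Arguments deq {I} a b.
From Stdlib Require Import Arith Lia List FunctionalExtensionality ProofIrrelevance ClassicalEpsilon PropExtensionality.
Import ListNotations.

Section Fwd.
Variables (I : Type) (G : I -> Group).
Hypothesis Hexp : forall i, exists n, exp_ab (G i) n.
Hypothesis Hcop : forall i j, i <> j -> forall m n,
            exp_ab (G i) m -> exp_ab (G j) n -> Nat.gcd m n = 1.
Variable k : nat.
Variable E : Group.
Variable psi : E -> RestrictedProduct G.
Hypothesis Hhom : is_hom psi.
Hypothesis Hsurj : forall g, exists e, psi e = g.
Hypothesis Hker : forall e, psi e = gone <-> zeta E (S k) e.

Definition co (e : E) (j : I) : G j := proj1_sig (psi e) j.
Lemma co_mul x y j : co (gmul x y) j = gmul (co x j) (co y j).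
Proof. unfold co. rewrite Hhom. reflexivity. Qed.
Lemma co_inv x j : co (ginv x) j = ginv (co x j).
Proof. unfold co. rewrite (homV _ _ _ Hhom). reflexivity. Qed.
Lemma co_one j : co gone j = gone.
Proof. unfold co. rewrite (hom1 _ _ _ Hhom). reflexivity. Qed.
Lemma co_comm x y j : co (comm x y) j = comm (co x j) (co y j).
Proof. unfold comm. rewrite !co_mul, !co_inv. reflexivity. Qed.

Definition Sj (l : I) (e : E) : Prop := forall j, l <> j -> co e j = gone.

Lemma Sj_mul l x y : Sj l x -> Sj l y -> Sj l (gmul x y).
Proof. intros Hx Hy j n. rewrite co_mul, Hx, Hy by auto. grp. Qed.
Lemma Sj_inv l x : Sj l x -> Sj l (ginv x).
Proof. intros Hx j n. rewrite co_inv, Hx by auto. grp. Qed.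
Lemma Sj_one l : Sj l gone.
Proof. intros j n. apply co_one. Qed.

Lemma lift_sgl l g : exists e, psi e = sgl l g /\ Sj l e.
Proof.
  destruct (Hsurj (sgl l g)) as [e He]. exists e; split; auto.
  intros j n. unfold co. rewrite He. apply sgl_off; auto.
Qed.

Lemma Sj_psi l e : Sj l e -> psi e = sgl l (co e l).
Proof.
  intro H. apply rp_eq. intro j. destruct (deq j l) as [->|n].
  - rewrite sgl_at. reflexivity.
  - rewrite sgl_off by auto. apply H; auto.
Qed.

Lemma psi_triv s : (forall j, co s j = gone) -> zeta E (S k) s.
Proof. intro H. apply Hker. apply rp_eq. intro j. apply H. Qed.

Lemma comm_triv s t : (forall j, co s j = gone \/ co t j = gone) -> zeta E (S k) (comm s t).
Proof.
  intro H. apply psi_triv. intro j. rewrite co_comm.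
  destruct (H j) as [-> | ->]; grp.
Qed.

Lemma lift_der l h : in_derived (G l) h -> exists d, derU E (Sj l) d /\ psi d = sgl l h.
Proof.
  induction 1 as [|a b h Hh IH].
  - exists gone. split. constructor. rewrite (hom1 _ _ _ Hhom), (hom1 _ _ _ (sgl_hom _ _ l)). reflexivity.
  - destruct IH as [d [Hd Hpd]].
    destruct (lift_sgl l a) as [u [Hu Su]]. destruct (lift_sgl l b) as [v [Hv Sv]].
    exists (gmul (comm u v) d). split. constructor; auto.
    rewrite Hhom, (homC _ _ _ Hhom), Hu, Hv, Hpd.
    rewrite (sgl_hom _ _ l), (homC _ _ _ (sgl_hom _ _ l)). reflexivity.
Qed.

Definition W := zeta E k.
Definition Q := QG E W (zeta1 E k) (zetaM E k) (zetaV E k) (zetaJ E k).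
Definition pi : E -> Q := qpi E W (zeta1 E k) (zetaM E k) (zetaV E k) (zetaJ E k).
Lemma pi_hom : is_hom pi. Proof. apply qpi_hom. Qed.
Lemma pi_one x : pi x = gone <-> W x. Proof. apply qpi_one. Qed.
Lemma pi_surj q : exists x, pi x = q. Proof. apply qpi_surj. Qed.

Lemma comm1_commute (H : Group) (x y : H) : comm x y = gone -> gmul x y = gmul y x.
Proof. intro Hc. transitivity (gmul (gmul y x) (comm x y)). grp. rewrite Hc; grp. Qed.

Lemma center_pi s : zeta E (S k) s -> center (pi s).
Proof.
  intros Hs q. destruct (pi_surj q) as [e <-]. apply comm1_commute.
  rewrite <- (homC _ _ _ pi_hom). apply pi_one. apply Hs.
Qed.

Lemma generic l n s t : exp_ab (G l) n -> Sj l s ->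
  (forall s', Sj l s' -> zeta E (S k) (comm s' t)) ->
  gpow (comm (pi s) (pi t)) n = gone.
Proof.
  intros Hn Ss Hc.
  destruct Hn as [_ [Hn _]].
  destruct (lift_der l _ (Hn (co s l))) as [d [Hd Hpd]].
  set (z := gmul (ginv d) (gpow s n)).
  assert (Hz : zeta E (S k) z).
  { apply Hker. unfold z. rewrite Hhom, (homV _ _ _ Hhom), Hpd, (homP _ _ _ Hhom), (Sj_psi l s Ss).
    rewrite <- (homP _ _ _ (sgl_hom _ _ l)). grp. }
  apply (fc_key Q (pi t) (fun q => exists s', Sj l s' /\ q = pi s') (pi s) n (pi d) (pi z)).
  - intros u [s' [Hs' ->]]. unfold fc. rewrite <- (homC _ _ _ pi_hom). apply center_pi. auto.
  - eauto.
  - clear -Hd. induction Hd. rewrite (hom1 _ _ _ pi_hom). constructor.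
    rewrite pi_hom, (homC _ _ _ pi_hom). constructor; eauto.
  - unfold fc. rewrite <- (homC _ _ _ pi_hom). apply pi_one. apply Hz.
  - rewrite <- (homP _ _ _ pi_hom), <- pi_hom. f_equal. unfold z. grp.
Qed.

Variable i : I.
Definition SB (e : E) : Prop := co e i = gone.

Lemma step1a a b l : Sj i a -> Sj l b -> i <> l -> W (comm a b).
Proof.
  intros Sa Sb n.
  destruct (Hexp i) as [ni Hni]. destruct (Hexp l) as [nl Hnl].
  apply pi_one. rewrite (homC _ _ _ pi_hom).
  apply (gpow_coprime _ _ ni nl). apply Hni. apply (Hcop i l n); auto.
  - apply (generic i); auto. intros s' Ss'. apply comm_triv. intro j.
    destruct (deq i j) as [<-|m]; [right; apply Sb; auto | left; apply Ss'; auto].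
  - replace (comm (pi a) (pi b)) with (ginv (comm (pi b) (pi a))) by grp.
    apply gpowV. apply (generic l); auto. intros s' Ss'. apply comm_triv. intro j.
    destruct (deq l j) as [<-|m]; [right; apply Sa; auto | left; apply Ss'; auto].
Qed.

Lemma step1 a b : Sj i a -> SB b -> W (comm a b).
Proof.
  intros Sa Sb. destruct (proj2_sig (psi b)) as [ls Hls].
  revert b Sb Hls. induction ls as [|j ls IH]; intros b Sb Hls.
  - assert (Hb : zeta E (S k) b) by (apply psi_triv; intro j; apply Hls; simpl; auto).
    replace (comm a b) with (ginv (comm b a)) by grp. apply zetaV. apply Hb.
  - destruct (deq i j) as [<-|n].
    + apply IH; auto. intros j' Hj'. destruct (deq i j') as [<-|m]. apply Sb.
      apply Hls. simpl. intros [|]; auto.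
    + destruct (lift_sgl j (co b j)) as [b1 [Hb1 Sb1]].
      set (b' := gmul (ginv b1) b).
      replace b with (gmul b1 b') by (unfold b'; grp).
      replace (comm a (gmul b1 b')) with (gmul (comm a b') (gconj (comm a b1) b')) by (unfold gconj; grp).
      apply zetaM; [|apply zetaJ, (step1a a b1 j); auto].
      assert (SBb' : SB b') by (unfold SB, b'; rewrite co_mul, co_inv, Sb1 by auto; rewrite Sb; grp).
      assert (Hls' : forall j', ~ In j' ls -> co b' j' = gone).
      { intros j' Hj'. unfold b'. rewrite co_mul, co_inv.
        destruct (deq j j') as [<-|m].
        - unfold co at 1. rewrite Hb1, sgl_at. grp.
        - rewrite Sb1 by auto. unfold co at 1. rewrite Hls. grp. simpl. intros [|]; auto. }
      apply IH; auto.
Qed.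

Lemma step2 m y : lcom E (Sj i) m y -> forall b, SB b -> zeta E (S k - m) (comm y b).
Proof.
  induction 1 as [a Sa|m y a Hy IH Sa]; intros b Sb.
  - simpl. rewrite Nat.sub_0_r. apply step1; auto.
  - rewrite hw'. 
    assert (Eq2 : forall X, gmul (gmul (ginv a) (ginv X)) a = gconj (ginv X) a) by (intros; unfold gconj; reflexivity).
    rewrite Eq2. apply zetaJ, zetaV, zetaM; apply zetaJ.
    + replace (S k - S m) with (k - m) by lia. apply (lemM E m y (lcom_T E _ _ _ Hy) k).
      apply step1. apply Sj_inv; auto. unfold SB in *. rewrite co_inv, Sb. grp.
    + replace (S k - S m) with ((S k - m) - 1) by lia. apply zeta_comm.
      replace (comm b (ginv y)) with (gmul (gmul y (comm y b)) (ginv y)) by grp.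
      apply zetaJ'. auto.
Qed.

Lemma decomp e : exists a b, Sj i a /\ SB b /\ e = gmul a b.
Proof.
  destruct (Hsurj (gmul (ginv (sgl i (co e i))) (psi e))) as [b Hb].
  exists (gmul e (ginv b)), b.
  assert (Cb : forall j, co b j = gmul (ginv (proj1_sig (sgl i (co e i)) j)) (co e j))
    by (intro j; unfold co at 1; rewrite Hb; reflexivity).
  split; [|split].
  - intros j n. rewrite co_mul, co_inv, Cb, sgl_off by auto. grp.
  - unfold SB. rewrite Cb, sgl_at. grp.
  - grp.
Qed.

Lemma SA1 : Sj i gone. Proof. apply Sj_one. Qed.
Definition EA : Group := SG E (Sj i) SA1 (Sj_mul i) (Sj_inv i).

Lemma step3 : forall j, j <= S k -> forall x : EA, zeta EA j x ->
  lcom E (Sj i) (S (S k - j)) (proj1_sig x) -> zeta E j (proj1_sig x).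
Proof.
  induction j as [|j IH]; intros Hj x Hx Hl.
  - simpl in *. rewrite Hx. reflexivity.
  - simpl. intro e. destruct (decomp e) as [a [b [Sa [Sb ->]]]].
    replace (comm (proj1_sig x) (gmul a b)) with
      (gmul (comm (proj1_sig x) b) (gconj (comm (proj1_sig x) a) b)) by (unfold gconj; grp).
    apply zetaM.
    + replace j with (S k - (S k - j)) at 1 by lia.
      replace (S (S k - S j)) with (S k - j) in Hl by lia.
      apply step2; auto.
    + apply zetaJ.
      change (comm (proj1_sig x) a) with (proj1_sig (comm (G:=EA) x (exist _ a Sa))).
      apply IH. lia. apply Hx.
      replace (S (S k - j)) with (S (S (S k - S j))) by lia.
      simpl. constructor; auto.
Qed.

Lemma fwd_main : Nc_capable (S k) (G i).
Proof.
  exists EA, (fun x => co (proj1_sig x) i). split; [|split].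
  - intros x y. apply co_mul.
  - intro g. destruct (lift_sgl i g) as [e [He Se]]. exists (exist _ e Se). simpl.
    unfold co. rewrite He. apply sgl_at.
  - intros [e Se]; simpl. split; intro H.
    + apply (zeta_restr E (Sj i) SA1 (Sj_mul i) (Sj_inv i) (S k) (exist _ e Se)). simpl. apply psi_triv. intro j. destruct (deq i j) as [<-|n]; auto.
    + assert (Z : zeta E (S k) e).
      { apply (step3 (S k) (le_n _) (exist _ e Se) H). replace (S k - S k) with 0 by lia.
        constructor; auto. }
      apply Hker in Z. unfold co. rewrite Z. reflexivity.
Qed.
End Fwd.
From Stdlib Require Import Arith Lia List FunctionalExtensionality ProofIrrelevance ClassicalEpsilon PropExtensionality.
Import ListNotations.

Lemma zeta_prod (I : Type) (H : I -> Group) : forall m (p : RestrictedProduct H),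
  zeta (RestrictedProduct H) m p <-> forall i, zeta (H i) m (proj1_sig p i).
Proof.
  induction m as [|m IH]; intro p; simpl.
  - split.
    + intros -> i. reflexivity.
    + intro Hp. apply rp_eq. exact Hp.
  - split.
    + intros Hp i y. specialize (Hp (sgl i y)). pose proof (proj1 (IH _) Hp i) as Hp2. clear Hp. rename Hp2 into Hp.
      change (zeta (H i) m (comm (proj1_sig p i) (proj1_sig (sgl i y) i))) in Hp.
      rewrite sgl_at in Hp. exact Hp.
    + intros Hp x. apply (proj2 (IH _)). intro i. apply Hp.
Qed.

Lemma cap_Nc1 (G : Group) : capable G <-> Nc_capable 1 G.
Proof.
  assert (Eq : forall (E : Group) (e : E), center e <-> zeta E 1 e).
  { intros E0 e0. simpl. split.
    - intros Hc x. unfold comm. rewrite mulA', Hc. grp.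
    - intros Hz x. apply comm1_commute. apply Hz. }
  split; intros (E & f & h1 & h2 & h3); exists E, f; (split; [auto|split; [auto|]]);
    intro x; rewrite (h3 x); first [apply Eq | symmetry; apply Eq].
Qed.

Section Bwd.
Variables (I : Type) (G : I -> Group) (c : nat).
Hypothesis HG : forall i, Nc_capable c (G i).

Definition pk i := constructive_indefinite_description _ (HG i).
Definition EF i : Group := proj1_sig (pk i).
Definition fk i := constructive_indefinite_description _ (proj2_sig (pk i)).
Definition fi i : EF i -> G i := proj1_sig (fk i).
Lemma fi_spec i : is_hom (fi i) /\ (forall g, exists e, fi i e = g) /\
  (forall e, fi i e = gone <-> zeta (EF i) c e).
Proof. exact (proj2_sig (fk i)). Qed.

Definition liftg i (g : G i) : EF i :=
  proj1_sig (constructive_indefinite_description _ (proj1 (proj2 (fi_spec i)) g)).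
Lemma liftg_spec i g : fi i (liftg i g) = g.
Proof. unfold liftg. destruct (constructive_indefinite_description _ _); auto. Qed.
Definition liftz i (g : G i) : EF i :=
  if excluded_middle_informative (g = gone) then gone else liftg i g.
Lemma liftz_spec i g : fi i (liftz i g) = g.
Proof. unfold liftz. destruct excluded_middle_informative as [->|n].
  apply (hom1 _ _ _ (proj1 (fi_spec i))). apply liftg_spec. Qed.

Lemma F_supp (p : RestrictedProduct EF) : fin_supp G (fun i => fi i (proj1_sig p i)).
Proof. destruct p as [p [l Hl]]. exists l. intros i Hi. simpl. rewrite Hl by auto.
  apply (hom1 _ _ _ (proj1 (fi_spec i))). Qed.
Definition F (p : RestrictedProduct EF) : RestrictedProduct G := exist _ _ (F_supp p).

Lemma L_supp (q : RestrictedProduct G) : fin_supp EF (fun i => liftz i (proj1_sig q i)).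
Proof. destruct q as [q [l Hl]]. exists l. intros i Hi. simpl. rewrite Hl by auto.
  unfold liftz. destruct excluded_middle_informative; auto. exfalso; auto. Qed.

Lemma bwd_main : Nc_capable c (RestrictedProduct G).
Proof.
  exists (RestrictedProduct EF), F. split; [|split].
  - intros x y. apply rp_eq. intro i. simpl. apply (proj1 (fi_spec i)).
  - intro q. exists (exist _ _ (L_supp q)). apply rp_eq. intro i. simpl. apply liftz_spec.
  - intro e. rewrite zeta_prod. split.
    + intros He i. apply (proj2 (proj2 (fi_spec i))).
      change (proj1_sig (F e) i = gone). rewrite He. reflexivity.
    + intro He. apply rp_eq. intro i. simpl. apply (proj2 (proj2 (fi_spec i))). auto.
Qed.
End Bwd.

Theorem mainTheorem3 (I : Type) (G : I -> Group)
  (Hexp : forall i, exists n, exp_ab (G i) n)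
  (Hcop : forall i j, i <> j -> forall m n,
            exp_ab (G i) m -> exp_ab (G j) n -> Nat.gcd m n = 1) :
  (capable (RestrictedProduct G) <-> forall i, capable (G i)) /\
  (forall c : nat, 1 <= c ->
     (Nc_capable c (RestrictedProduct G) <-> forall i, Nc_capable c (G i))).
Proof.
  assert (P2 : forall c : nat, 1 <= c ->
     (Nc_capable c (RestrictedProduct G) <-> forall i, Nc_capable c (G i))).
  { intros c Hc. destruct c as [|k]; [lia|]. split.
    - intros (E & psi & h1 & h2 & h3) i. exact (fwd_main I G Hexp Hcop k E psi h1 h2 h3 i).
    - intro H. apply bwd_main. exact H. }
  split; auto.
  rewrite cap_Nc1, P2 by lia. split; intros H i; apply cap_Nc1; auto.
Qed.
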